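(* Let $(V,\|\cdot\|)$ be a normed plane. For every $x\in S$, the inner bisector $\mathrm{bis_I}(-x,x)$ is a curve homeomorphic to a closed (compact) interval.
   Context: A normed (Minkowski) plane $(V,\|\cdot\|)$ is a two-dimensional real vector space with a norm; $B=\{v:\|v\|\le1\}$ is its unit ball and $S=\{v:\|v\|=1\}$ its unit circle. For distinct $x,y$, $\mathrm{bis}(x,y)=\{z\in V:\|z-x\|=\|z-y\|\}$. For $x\in S$, the inner bisector is $\mathrm{bis_I}(-x,x)=\mathrm{bis}(-x,x)\cap B$. *)

(* Defs.v *)
From Stdlib Require Import Reals Lra.
Open Scope R_scope.

(* The plane V is modelled as R*R (every 2-dim real vector space is
   linearly isomorphic to R^2, and the norm is arbitrary). *)
Definition vec := (R * R)%type.
Definition vadd (v w : vec) : vec := (fst v + fst w, snd v + snd w).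
Definition vscal (a : R) (v : vec) : vec := (a * fst v, a * snd v).
Definition vopp (v : vec) : vec := vscal (-1) v.
Definition vsub (v w : vec) : vec := vadd v (vopp w).
Definition vzero : vec := (0, 0).

Record is_norm (N : vec -> R) : Prop := {
  norm_nonneg : forall v, 0 <= N v;
  norm_definite : forall v, N v = 0 -> v = vzero;
  norm_hom : forall a v, N (vscal a v) = Rabs a * N v;
  norm_triangle : forall v w, N (vadd v w) <= N v + N w
}.

Definition unit_ball (N : vec -> R) (v : vec) : Prop := N v <= 1.
Definition unit_circle (N : vec -> R) (v : vec) : Prop := N v = 1.

Definition bisector (N : vec -> R) (x y : vec) (z : vec) : Prop :=
  N (vsub z x) = N (vsub z y).

Definition inner_bisector (N : vec -> R) (x : vec) (z : vec) : Prop :=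
  bisector N (vopp x) x z /\ unit_ball N z.

(* A subset A of the normed plane is homeomorphic to the compact interval
   [0,1] (topology of the plane = norm topology; topology of A and of [0,1]
   are the subspace topologies). *)
Definition homeomorphic_to_unit_interval (N : vec -> R) (A : vec -> Prop) : Prop :=
  exists (f : R -> vec) (g : vec -> R),
    (forall t, 0 <= t <= 1 -> A (f t)) /\
    (forall z, A z -> 0 <= g z <= 1) /\
    (forall t, 0 <= t <= 1 -> g (f t) = t) /\
    (forall z, A z -> f (g z) = z) /\
    (forall t0, 0 <= t0 <= 1 -> forall eps, 0 < eps -> exists delta, 0 < delta /\
        forall t, 0 <= t <= 1 -> Rabs (t - t0) < delta -> N (vsub (f t) (f t0)) < eps) /\
    (forall z0, A z0 -> forall eps, 0 < eps -> exists delta, 0 < delta /\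
        forall z, A z -> N (vsub z z0) < delta -> Rabs (g z - g z0) < eps).

(* Main.v *)
Require Import Defs.
From Stdlib Require Import Reals Lra Psatz ClassicalEpsilon Classical.
Open Scope R_scope.

Section S.
Variable N : vec -> R.
Variable HN : is_norm N.

Lemma Next u v : fst u = fst v -> snd u = snd v -> N u = N v.
Proof. destruct u, v; simpl; intros; subst; reflexivity. Qed.

Lemma Ntri u v w : fst u = fst v + fst w -> snd u = snd v + snd w -> N u <= N v + N w.
Proof.
  intros h1 h2. rewrite (Next u (vadd v w)) by (simpl; auto). apply (norm_triangle _ HN).
Qed.

Lemma Nhom u a v : fst u = a * fst v -> snd u = a * snd v -> N u = Rabs a * N v.
Proof.
  intros h1 h2. rewrite (Next u (vscal a v)) by (simpl; auto). apply (norm_hom _ HN).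
Qed.

Lemma Nnn v : 0 <= N v.
Proof. apply (norm_nonneg _ HN). Qed.

Lemma Nhomp u a v : 0 <= a -> fst u = a * fst v -> snd u = a * snd v -> N u = a * N v.
Proof. intros; rewrite (Nhom u a v) by auto; rewrite Rabs_pos_eq; auto. Qed.

Lemma Nopp u v : fst u = - fst v -> snd u = - snd v -> N u = N v.
Proof. intros; rewrite (Nhom u (-1) v) by lra. replace (Rabs (-1)) with 1 by (unfold Rabs; destruct Rcase_abs; lra); ring. Qed.

Lemma Nzero : N (0,0) = 0.
Proof. rewrite (Nhom (0,0) 0 (0,0)) by (simpl; ring). rewrite Rabs_R0; ring. Qed.

Lemma lemA q1 q2 e1 e2 mu :
  N (q1+e1, q2+e2) <= N (q1-e1, q2-e2) -> 0 <= mu <= 1 ->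
  N (mu*q1 - (1-mu)*e1 + e1, mu*q2 - (1-mu)*e2 + e2) <=
  N (mu*q1 - (1-mu)*e1 - e1, mu*q2 - (1-mu)*e2 - e2).
Proof.
  intros H Hm.
  destruct (Req_dec mu 0) as [->|Hm0].
  - rewrite (Next _ (0,0)) by (simpl; ring). rewrite Nzero. apply Nnn.
  - set (A := N (mu*q1 - (1-mu)*e1 + e1, mu*q2 - (1-mu)*e2 + e2)).
    set (C := N (mu*q1 - (1-mu)*e1 - e1, mu*q2 - (1-mu)*e2 - e2)).
    assert (HA : A = mu * N (q1+e1, q2+e2)) by (unfold A; apply Nhomp; simpl; [lra|ring|ring]).
    assert (HB : N (mu*q1 - mu*e1, mu*q2 - mu*e2) = mu * N (q1-e1, q2-e2)) by (apply Nhomp; simpl; [lra|ring|ring]).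
    assert (Hc : N (mu*q1 - mu*e1, mu*q2 - mu*e2) <= mu * C + (1-mu) * A).
    { eapply Rle_trans. apply (Ntri _ (mu * (mu*q1 - (1-mu)*e1 - e1), mu * (mu*q2 - (1-mu)*e2 - e2))
        ((1-mu) * (mu*q1 - (1-mu)*e1 + e1), (1-mu) * (mu*q2 - (1-mu)*e2 + e2))); simpl; ring.
      rewrite (Nhomp _ mu (mu*q1 - (1-mu)*e1 - e1, mu*q2 - (1-mu)*e2 - e2)) by (simpl; first [lra|ring]).
      rewrite (Nhomp ((1 - mu) * (mu * q1 - (1 - mu) * e1 + e1), (1 - mu) * (mu * q2 - (1 - mu) * e2 + e2)) (1-mu) (mu*q1 - (1-mu)*e1 + e1, mu*q2 - (1-mu)*e2 + e2)) by (simpl; first [lra|ring]). fold A C. lra. }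
    assert (mu * A <= mu * C) by nra.
    apply Rmult_le_reg_l with mu; lra.
Qed.

Variable x : vec.
Variable hx : N x = 1.
Let x1 := fst x.
Let x2 := snd x.

Lemma Nx : N (x1, x2) = 1.
Proof. rewrite <- hx. apply Next; reflexivity. Qed.

Lemma Nsub u v : N u <= N v + N (fst u - fst v, snd u - snd v).
Proof. apply Ntri; simpl; ring. Qed.

Lemma holder z1 z2 w1 w2 d1 d2 eps :
  N (z1, z2) <= 1 -> N (w1, w2) <= 1 ->
  N (z1+x1, z2+x2) = N (z1-x1, z2-x2) -> N (w1+x1, w2+x2) = N (w1-x1, w2-x2) ->
  w1 = z1 + eps*x1 + d1 -> w2 = z2 + eps*x2 + d2 -> 0 <= eps ->
  eps * eps <= (2 + eps) * N (d1, d2).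
Proof.
  intros Hz Hw Bz Bw E1 E2 He. subst w1 w2.
  set (a := N (z1+x1, z2+x2)). set (b := N (z1 + eps*x1 + d1 + x1, z2 + eps*x2 + d2 + x2)).
  set (nd := N (d1, d2)).
  assert (Hi : 2 + eps <= a + b + nd).
  { assert (E : N ((2+eps)*x1, (2+eps)*x2) = 2 + eps).
    { rewrite (Nhomp _ (2+eps) (x1,x2)) by (simpl; first [lra|ring]). rewrite Nx; ring. }
    rewrite <- E.
    eapply Rle_trans. apply (Ntri _ (z1 + eps*x1 + d1 + x1 - (z1 - x1), z2 + eps*x2 + d2 + x2 - (z2 - x2)) (-d1, -d2)); simpl; ring.
    eapply Rle_trans. apply Rplus_le_compat_r. apply (Ntri _ (z1 + eps*x1 + d1 + x1, z2 + eps*x2 + d2 + x2) (-(z1 - x1), -(z2-x2))); simpl; ring.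
    rewrite (Nopp (-(z1 - x1), -(z2-x2)) (z1-x1, z2-x2)) by (simpl; ring).
    rewrite (Nopp (-d1,-d2) (d1,d2)) by (simpl; ring).
    fold b nd. unfold a. rewrite Bz. lra. }
  assert (Hii : (1+eps) * a <= eps + b + nd).
  { assert (E : N ((1+eps)*(z1+x1), (1+eps)*(z2+x2)) = (1+eps) * a).
    { unfold a. apply Nhomp; simpl; first [lra|ring]. }
    rewrite <- E.
    eapply Rle_trans. apply (Ntri _ (eps*z1, eps*z2) (z1 + eps*x1 + d1 + x1 - d1, z2 + eps*x2 + d2 + x2 - d2)); simpl; ring.
    rewrite (Nhomp (eps*z1, eps*z2) eps (z1,z2)) by (simpl; first [lra|ring]).
    eapply Rle_trans. apply Rplus_le_compat_l. apply (Ntri _ (z1 + eps*x1 + d1 + x1, z2 + eps*x2 + d2 + x2) (-d1, -d2)); simpl; ring.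
    rewrite (Nopp (-d1,-d2) (d1,d2)) by (simpl; ring). fold b nd. nra. }
  assert (Hiii : (1+eps) * b <= eps + a + nd).
  { assert (E : N ((1+eps)*(z1 + eps*x1 + d1 - x1), (1+eps)*(z2 + eps*x2 + d2 - x2)) = (1+eps) * b).
    { unfold b. rewrite Bw. apply Nhomp; simpl; first [lra|ring]. }
    rewrite <- E.
    eapply Rle_trans. apply (Ntri _ (eps*(z1 + eps*x1 + d1), eps*(z2 + eps*x2 + d2)) (z1 - x1 + d1, z2 - x2 + d2)); simpl; ring.
    rewrite (Nhomp (eps*(z1 + eps*x1 + d1), eps*(z2 + eps*x2 + d2)) eps (z1 + eps*x1 + d1, z2 + eps*x2 + d2)) by (simpl; first [lra|ring]).
    eapply Rle_trans. apply Rplus_le_compat_l. apply (Ntri _ (z1 - x1, z2 - x2) (d1, d2)); simpl; ring.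
    fold nd. unfold a. rewrite Bz. nra. }
  nra.
Qed.

Lemma Nx0 : x1 * x1 + x2 * x2 > 0.
Proof.
  destruct (Req_dec x1 0) as [h1|h1]; [destruct (Req_dec x2 0) as [h2|h2]|]; try nra.
  exfalso. pose proof Nx as H. rewrite h1, h2, Nzero in H. lra.
Qed.

Definition DD := x1 * x1 + x2 * x2.
Definition P (s t : R) : vec := (s * (- x2) + t * x1, s * x1 + t * x2).
Definition ell (v : vec) := (x1 * snd v - x2 * fst v) / DD.
Definition tau (v : vec) := (x1 * fst v + x2 * snd v) / DD.

Lemma decomp v : v = P (ell v) (tau v).
Proof.
  destruct v as [v1 v2]. unfold P, ell, tau, DD; simpl. pose proof Nx0.
  f_equal; field; lra.
Qed.

Lemma ell_P s t : ell (P s t) = s.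
Proof. unfold P, ell, DD; simpl. pose proof Nx0. field; lra. Qed.
Lemma tau_P s t : tau (P s t) = t.
Proof. unfold P, tau, DD; simpl. pose proof Nx0. field; lra. Qed.

Definition Ny := N (P 1 0).

Lemma Ny_pos : 0 < Ny.
Proof.
  destruct (Nnn (P 1 0)) as [h|h]; [exact h|].
  exfalso. symmetry in h. apply (norm_definite _ HN) in h. unfold P, vzero in h.
  injection h. intros. pose proof Nx0. nra.
Qed.

Lemma N_P_upper s t : N (P s t) <= Rabs s * Ny + Rabs t.
Proof.
  eapply Rle_trans. apply (Ntri _ (P s 0) (P 0 t)); unfold P; simpl; ring.
  rewrite (Nhom (P s 0) s (P 1 0)) by (unfold P; simpl; ring).
  rewrite (Nhom (P 0 t) t (x1, x2)) by (unfold P; simpl; ring).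
  rewrite Nx. unfold Ny. lra.
Qed.

Lemma N_P_tbound s t : Rabs t <= N (P s t) + Rabs s * Ny.
Proof.
  replace (Rabs t) with (N (P 0 t)).
  2:{ rewrite (Nhom (P 0 t) t (x1, x2)) by (unfold P; simpl; ring). rewrite Nx; ring. }
  eapply Rle_trans. apply (Ntri _ (P s t) (P (-s) 0)); unfold P; simpl; ring.
  rewrite (Nhom (P (-s) 0) (-s) (P 1 0)) by (unfold P; simpl; ring).
  rewrite Rabs_Ropp. unfold Ny. lra.
Qed.

Lemma lip_cont (f : R -> R) L : 0 <= L -> (forall a b, Rabs (f a - f b) <= L * Rabs (a - b)) -> continuity f.
Proof.
  intros HL Hf x0. unfold continuity_pt, continue_in, limit1_in, limit_in. intros eps Heps.
  exists (eps / (L + 1)). split. apply Rdiv_lt_0_compat; lra.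
  intros y [_ Hy]. simpl in *. unfold R_dist in *.
  eapply Rle_lt_trans. apply Hf.
  apply Rle_lt_trans with ((L+1) * Rabs (y - x0)). pose proof (Rabs_pos (y - x0)). nra.
  apply Rmult_lt_reg_l with (/ (L+1)). apply Rinv_0_lt_compat; lra.
  rewrite <- Rmult_assoc, Rinv_l by lra. unfold Rdiv in Hy. lra.
Qed.

Lemma lower_bound : exists c0, 0 < c0 /\ forall s t, c0 * Rabs s <= N (P s t).
Proof.
  set (m := fun t => N (P 1 t)).
  assert (Hm : continuity m).
  { apply lip_cont with 1. lra. intros a b. unfold m.
    assert (H1 := Nsub (P 1 a) (P 1 b)). assert (H2 := Nsub (P 1 b) (P 1 a)).
    rewrite (Nhom (fst (P 1 a) - fst (P 1 b), snd (P 1 a) - snd (P 1 b)) (a - b) (x1, x2)) in H1 by (unfold P; simpl; ring).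
    rewrite (Nhom (fst (P 1 b) - fst (P 1 a), snd (P 1 b) - snd (P 1 a)) (b - a) (x1, x2)) in H2 by (unfold P; simpl; ring).
    rewrite Nx, Rabs_minus_sym in H2. rewrite Nx in H1.
    apply Rabs_le. lra. }
  pose proof Ny_pos.
  destruct (continuity_ab_min m (-(2*Ny)) (2*Ny)) as [tm [Htm Htm2]]. lra.
  intros; apply Hm.
  assert (Hpos : 0 < m tm).
  { unfold m. destruct (Nnn (P 1 tm)) as [h|h]; [exact h|].
    exfalso. symmetry in h. apply (norm_definite _ HN) in h. unfold P, vzero in h.
    injection h. intros. pose proof Nx0. nra. }
  exists (Rmin (m tm) Ny). split. apply Rmin_glb_lt; lra.
  assert (Hu : forall u, Rmin (m tm) Ny <= N (P 1 u)).
  { intros u. destruct (Rle_dec (Rabs u) (2*Ny)) as [hu|hu].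
    - apply Rle_trans with (m tm). apply Rmin_l. apply Htm. pose proof (Rle_abs u). pose proof (Rle_abs (-u)). rewrite Rabs_Ropp in *. lra.
    - apply Rle_trans with Ny. apply Rmin_r. pose proof (N_P_tbound 1 u). rewrite Rabs_R1 in H0. lra. }
  intros s t. destruct (Req_dec s 0) as [->|hs].
  - rewrite Rabs_R0, Rmult_0_r. apply Nnn.
  - rewrite (Nhom (P s t) s (P 1 (t/s))) by (unfold P; simpl; field; auto).
    rewrite Rmult_comm. apply Rmult_le_compat_l. apply Rabs_pos. apply Hu.
Qed.

Definition hh (s t : R) := N (fst (P s t) + x1, snd (P s t) + x2) - N (fst (P s t) - x1, snd (P s t) - x2).
Definition bisI (z : vec) := N (fst z + x1, snd z + x2) = N (fst z - x1, snd z - x2) /\ N z <= 1.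

Lemma bisI_P s t : bisI (P s t) <-> hh s t = 0 /\ N (P s t) <= 1.
Proof. unfold bisI, hh. split; intros [h1 h2]; split; auto; lra. Qed.

Lemma ivt01 (f : R -> R) a b : continuity f -> a <= b -> f a <= 0 -> 0 <= f b ->
  exists c, a <= c <= b /\ f c = 0.
Proof.
  intros Hf Hab Ha Hb.
  destruct (Req_dec (f a) 0) as [h|h]. exists a; split; [lra|auto].
  destruct (Req_dec (f b) 0) as [h'|h']. exists b; split; [lra|auto].
  destruct (Req_dec a b) as [e|e]. subst; lra.
  destruct (IVT f a b Hf) as [c [Hc1 Hc2]]; try lra. exists c; auto.
Qed.

Lemma Nrev u v : Rabs (N u - N v) <= N (fst u - fst v, snd u - snd v).
Proof.
  pose proof (Nsub u v). pose proof (Nsub v u).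
  rewrite (Nopp (fst v - fst u, snd v - snd u) (fst u - fst v, snd u - snd v)) in H0 by (simpl; ring).
  apply Rabs_le; lra.
Qed.

Lemma hh_lip s t s' t' : Rabs (hh s t - hh s' t') <= 2 * (Rabs (s - s') * Ny + Rabs (t - t')).
Proof.
  unfold hh.
  assert (Hd : N (P (s - s') (t - t')) <= Rabs (s - s') * Ny + Rabs (t - t')) by apply N_P_upper.
  pose proof (Nrev (fst (P s t) + x1, snd (P s t) + x2) (fst (P s' t') + x1, snd (P s' t') + x2)) as H1.
  pose proof (Nrev (fst (P s t) - x1, snd (P s t) - x2) (fst (P s' t') - x1, snd (P s' t') - x2)) as H2.
  rewrite (Next (fst (fst (P s t) + x1, snd (P s t) + x2) - fst (fst (P s' t') + x1, snd (P s' t') + x2),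
     snd (fst (P s t) + x1, snd (P s t) + x2) - snd (fst (P s' t') + x1, snd (P s' t') + x2)) (P (s - s') (t - t'))) in H1 by (unfold P; simpl; ring).
  rewrite (Next (fst (fst (P s t) - x1, snd (P s t) - x2) - fst (fst (P s' t') - x1, snd (P s' t') - x2),
     snd (fst (P s t) - x1, snd (P s t) - x2) - snd (fst (P s' t') - x1, snd (P s' t') - x2)) (P (s - s') (t - t'))) in H2 by (unfold P; simpl; ring).
  set (a := N (fst (P s t) + x1, snd (P s t) + x2)) in *.
  set (b := N (fst (P s t) - x1, snd (P s t) - x2)) in *.
  set (c := N (fst (P s' t') + x1, snd (P s' t') + x2)) in *.
  set (d := N (fst (P s' t') - x1, snd (P s' t') - x2)) in *.
  replace (a - b - (c - d)) with ((a - c) - (b - d)) by ring.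
  eapply Rle_trans. apply Rabs_triang. rewrite Rabs_Ropp. lra.
Qed.

Lemma hh_cont a b c d : continuity (fun l => hh (a * l + b) (c * l + d)).
Proof.
  apply lip_cont with (2 * (Rabs a * Ny + Rabs c)).
  pose proof Ny_pos. pose proof (Rabs_pos a). pose proof (Rabs_pos c). nra.
  intros l l'. eapply Rle_trans. apply hh_lip.
  replace (a * l + b - (a * l' + b)) with (a * (l - l')) by ring.
  replace (c * l + d - (c * l' + d)) with (c * (l - l')) by ring.
  rewrite !Rabs_mult. pose proof Ny_pos. right; ring.
Qed.

Lemma holderP s t s' t' : bisI (P s t) -> bisI (P s' t') -> t <= t' ->
  (t' - t) * (t' - t) <= (2 + (t' - t)) * (Rabs (s' - s) * Ny).
Proof.
  intros [B1 K1] [B2 K2] Ht.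
  unfold Ny; rewrite <- (Nhom (P (s' - s) 0) (s' - s) (P 1 0)) by (unfold P; simpl; ring).
  apply (holder (fst (P s t)) (snd (P s t)) (fst (P s' t')) (snd (P s' t')) (fst (P (s'-s) 0)) (snd (P (s'-s) 0)) (t' - t));
    auto; try (unfold P, x1, x2; simpl; ring); lra.
Qed.

Lemma uniq s t t' : bisI (P s t) -> bisI (P s t') -> t = t'.
Proof.
  intros H1 H2. destruct (Rle_dec t t') as [h|h].
  - pose proof (holderP _ _ _ _ H1 H2 h). rewrite Rminus_diag, Rabs_R0 in H. nra.
  - assert (h' : t' <= t) by lra. pose proof (holderP _ _ _ _ H2 H1 h'). rewrite Rminus_diag, Rabs_R0 in H. nra.
Qed.

Lemma bisI_sym s t : bisI (P s t) -> bisI (P (-s) (-t)).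
Proof.
  intros [B K]. split.
  - rewrite (Nopp (fst (P (- s) (- t)) + x1, snd (P (- s) (- t)) + x2) (fst (P s t) - x1, snd (P s t) - x2)) by (unfold P; simpl; ring).
    rewrite (Nopp (fst (P (- s) (- t)) - x1, snd (P (- s) (- t)) - x2) (fst (P s t) + x1, snd (P s t) + x2)) by (unfold P; simpl; ring).
    auto.
  - rewrite (Nopp (P (-s) (-t)) (P s t)) by (unfold P; simpl; ring). auto.
Qed.

Lemma bisI_0 : bisI (P 0 0).
Proof.
  split.
  - rewrite (Nopp (fst (P 0 0) + x1, snd (P 0 0) + x2) (fst (P 0 0) - x1, snd (P 0 0) - x2)) by (unfold P; simpl; ring). auto.
  - rewrite (Next (P 0 0) (0,0)) by (unfold P; simpl; ring). rewrite Nzero. lra.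
Qed.

Lemma N_comb s t s2 t2 mu c : 0 <= mu -> s = mu * s2 -> t = mu * t2 + c ->
  N (P s t) <= mu * N (P s2 t2) + Rabs c.
Proof.
  intros Hm -> ->.
  eapply Rle_trans. apply (Ntri _ (mu * fst (P s2 t2), mu * snd (P s2 t2)) (c * x1, c * x2)); unfold P; simpl; ring.
  rewrite (Nhomp (mu * fst (P s2 t2), mu * snd (P s2 t2)) mu (P s2 t2)) by (simpl; auto).
  rewrite (Nhom (c * x1, c * x2) c (x1, x2)) by (simpl; auto). rewrite Nx. lra.
Qed.

Lemma fill s2 t2 s : bisI (P s2 t2) -> 0 <= s -> s <= s2 -> exists t, bisI (P s t).
Proof.
  intros HB Hs Hs2.
  destruct (Req_dec s2 0) as [e|e].
  { exists 0. replace s with 0 by lra. apply bisI_0. }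
  set (mu := s / s2).
  assert (Hmu : 0 <= mu <= 1).
  { unfold mu. split. unfold Rdiv. apply Rmult_le_pos. lra. left; apply Rinv_0_lt_compat; lra.
    apply Rmult_le_reg_r with s2. lra. unfold Rdiv. rewrite Rmult_assoc, Rinv_l by auto. lra. }
  assert (Es : s = mu * s2) by (unfold mu; field; auto).
  destruct HB as [B K].
  pose proof (lemA (fst (P s2 t2)) (snd (P s2 t2)) x1 x2 mu (Req_le _ _ B) Hmu) as H1.
  assert (B' : N (fst (P s2 t2) + - x1, snd (P s2 t2) + - x2) <= N (fst (P s2 t2) - - x1, snd (P s2 t2) - - x2)).
  { rewrite (Next (fst (P s2 t2) + - x1, snd (P s2 t2) + - x2) (fst (P s2 t2) - x1, snd (P s2 t2) - x2)) by (simpl; ring).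
    rewrite (Next (fst (P s2 t2) - - x1, snd (P s2 t2) - - x2) (fst (P s2 t2) + x1, snd (P s2 t2) + x2)) by (simpl; ring).
    lra. }
  pose proof (lemA (fst (P s2 t2)) (snd (P s2 t2)) (-x1) (-x2) mu B' Hmu) as H2.
  set (a := mu * t2 - (1 - mu)). set (b := mu * t2 + (1 - mu)).
  assert (Ha : hh s a <= 0).
  { unfold hh.
    rewrite (Next (fst (P s a) + x1, snd (P s a) + x2) (mu * fst (P s2 t2) - (1 - mu) * x1 + x1, mu * snd (P s2 t2) - (1 - mu) * x2 + x2)) by (unfold a, P; rewrite Es; simpl; ring).
    rewrite (Next (fst (P s a) - x1, snd (P s a) - x2) (mu * fst (P s2 t2) - (1 - mu) * x1 - x1, mu * snd (P s2 t2) - (1 - mu) * x2 - x2)) by (unfold a, P; rewrite Es; simpl; ring).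
    lra. }
  assert (Hb : 0 <= hh s b).
  { unfold hh.
    rewrite (Next (fst (P s b) + x1, snd (P s b) + x2) (mu * fst (P s2 t2) - (1 - mu) * - x1 - - x1, mu * snd (P s2 t2) - (1 - mu) * - x2 - - x2)) by (unfold b, P; rewrite Es; simpl; ring).
    rewrite (Next (fst (P s b) - x1, snd (P s b) - x2) (mu * fst (P s2 t2) - (1 - mu) * - x1 + - x1, mu * snd (P s2 t2) - (1 - mu) * - x2 + - x2)) by (unfold b, P; rewrite Es; simpl; ring).
    lra. }
  destruct (ivt01 (fun l => hh (0 * l + s) (1 * l + 0)) a b (hh_cont 0 s 1 0)) as [c [Hc Hc0]].
  unfold a, b; lra.
  replace (0 * a + s) with s by ring. replace (1 * a + 0) with a by ring. auto.
  replace (0 * b + s) with s by ring. replace (1 * b + 0) with b by ring. auto.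
  replace (0 * c + s) with s in Hc0 by ring. replace (1 * c + 0) with c in Hc0 by ring.
  exists c. apply bisI_P. split; auto.
  eapply Rle_trans. apply (N_comb s c s2 t2 mu (c - mu * t2)); auto; try lra; try ring.
  unfold a, b in Hc. apply Rle_trans with (mu * 1 + (1 - mu)). 2: lra.
  apply Rplus_le_compat. apply Rmult_le_compat_l; lra.
  apply Rabs_le; lra.
Qed.

Lemma hh_neg1 : hh 0 (-1) = -2.
Proof.
  unfold hh. rewrite (Next (fst (P 0 (-1)) + x1, snd (P 0 (-1)) + x2) (0,0)) by (unfold P; simpl; ring).
  rewrite (Nhom (fst (P 0 (-1)) - x1, snd (P 0 (-1)) - x2) (-2) (x1,x2)) by (unfold P; simpl; ring).
  rewrite Nzero, Nx. replace (Rabs (-2)) with 2 by (unfold Rabs; destruct Rcase_abs; lra). ring.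
Qed.

Lemma hh_1 : hh 0 1 = 2.
Proof.
  unfold hh. rewrite (Next (fst (P 0 1) - x1, snd (P 0 1) - x2) (0,0)) by (unfold P; simpl; ring).
  rewrite (Nhom (fst (P 0 1) + x1, snd (P 0 1) + x2) 2 (x1,x2)) by (unfold P; simpl; ring).
  rewrite Nzero, Nx. replace (Rabs 2) with 2 by (unfold Rabs; destruct Rcase_abs; lra). ring.
Qed.

Lemma exists_pos : exists s t, 0 < s /\ bisI (P s t).
Proof.
  pose proof Ny_pos. set (k := 1 / Ny).
  assert (Hk : 0 < k) by (unfold k; apply Rdiv_lt_0_compat; lra).
  assert (Hk2 : k * Ny = 1) by (unfold k; field; lra).
  destruct (Rle_dec 0 (hh k 0)) as [h|h].
  - destruct (ivt01 (fun l => hh (k * l + 0) (1 * l + -1)) 0 1 (hh_cont k 0 1 (-1))) as [c [Hc Hc0]].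
    lra.
    replace (k * 0 + 0) with 0 by ring. replace (1 * 0 + -1) with (-1) by ring. rewrite hh_neg1; lra.
    replace (k * 1 + 0) with k by ring. replace (1 * 1 + -1) with 0 by ring. auto.
    simpl in Hc0.
    assert (c <> 0). { intro e; subst c. replace (k * 0 + 0) with 0 in Hc0 by ring.
      replace (1 * 0 + -1) with (-1) in Hc0 by ring. rewrite hh_neg1 in Hc0. lra. }
    exists (k * c + 0), (1 * c + -1). split. nra. apply bisI_P; split; auto.
    eapply Rle_trans. apply N_P_upper. rewrite Rabs_pos_eq by nra.
    rewrite Rabs_left1 by lra. nra.
  - destruct (ivt01 (fun l => hh (-k * l + k) (1 * l + 0)) 0 1 (hh_cont (-k) k 1 0)) as [c [Hc Hc0]].
    lra.
    replace (-k * 0 + k) with k by ring. replace (1 * 0 + 0) with 0 by ring. lra.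
    replace (-k * 1 + k) with 0 by ring. replace (1 * 1 + 0) with 1 by ring. rewrite hh_1; lra.
    simpl in Hc0.
    assert (c <> 1). { intro e; subst c. replace (-k * 1 + k) with 0 in Hc0 by ring.
      replace (1 * 1 + 0) with 1 in Hc0 by ring. rewrite hh_1 in Hc0. lra. }
    exists (-k * c + k), (1 * c + 0). split. nra. apply bisI_P; split; auto.
    eapply Rle_trans. apply N_P_upper. rewrite Rabs_pos_eq by nra.
    rewrite Rabs_pos_eq by lra. nra.
Qed.

Variable c0 : R.
Variable hc0 : 0 < c0.
Variable Hc0 : forall s t, c0 * Rabs s <= N (P s t).

Definition Sset s := exists t, bisI (P s t).

Lemma S_bound s t : bisI (P s t) -> Rabs s <= 1 / c0.
Proof.
  intros [_ K]. pose proof (Hc0 s t). apply Rmult_le_reg_l with c0; auto.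
  replace (c0 * (1 / c0)) with 1 by (field; lra). lra.
Qed.

Definition M0 := 1 + Ny / c0.

Lemma t_bound s t : bisI (P s t) -> Rabs t <= M0.
Proof.
  intros HB. pose proof (S_bound s t HB). pose proof HB as [_ K]. pose proof (N_P_tbound s t).
  unfold M0. pose proof Ny_pos. apply Rle_trans with (1 + Rabs s * Ny). lra.
  replace (Ny / c0) with ((1/c0) * Ny) by (field; lra). nra.
Qed.

Definition T s := ClassicalEpsilon.epsilon (inhabits 0) (fun t => bisI (P s t)).

Lemma T_spec s : Sset s -> bisI (P s (T s)).
Proof. intros H. unfold T. apply ClassicalEpsilon.epsilon_spec. exact H. Qed.

Definition Kc := (2 + 2 * M0) * Ny.

Lemma T_hold s s' : Sset s -> Sset s' -> (T s - T s') * (T s - T s') <= Kc * Rabs (s - s').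
Proof.
  intros H H'. apply T_spec in H. apply T_spec in H'.
  pose proof (t_bound _ _ H). pose proof (t_bound _ _ H'). pose proof Ny_pos.
  pose proof (Rabs_pos (s - s')).
  unfold Kc. destruct (Rle_dec (T s) (T s')) as [h|h].
  - pose proof (holderP _ _ _ _ H H' h). rewrite Rabs_minus_sym in H4.
    assert (T s' - T s <= 2 * M0).
    { pose proof (Rle_abs (T s')). pose proof (Rle_abs (- T s)). rewrite Rabs_Ropp in H6. lra. }
    replace ((T s - T s') * (T s - T s')) with ((T s' - T s) * (T s' - T s)) by ring.
    eapply Rle_trans. apply H4.
    assert (0 <= (2 * M0 - (T s' - T s)) * (Rabs (s - s') * Ny)) by (apply Rmult_le_pos; nra). nra.
  - assert (h' : T s' <= T s) by lra.
    pose proof (holderP _ _ _ _ H' H h').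
    assert (T s - T s' <= 2 * M0).
    { pose proof (Rle_abs (T s)). pose proof (Rle_abs (- T s')). rewrite Rabs_Ropp in H6. lra. }
    eapply Rle_trans. apply H4.
    assert (0 <= (2 * M0 - (T s - T s')) * (Rabs (s' - s) * Ny)) by (pose proof (Rabs_pos (s' - s)); apply Rmult_le_pos; nra).
    rewrite (Rabs_minus_sym s' s) in *. nra.
Qed.

Lemma le_eps a b : (forall eps, 0 < eps -> a <= b + eps) -> a <= b.
Proof. intros H. destruct (Rle_dec a b) as [h|h]; auto. specialize (H ((a - b)/2)). lra. Qed.

Lemma closedP s0 t0 : (forall eps, 0 < eps -> exists s t, bisI (P s t) /\ Rabs (s - s0) * Ny + Rabs (t - t0) < eps) ->
  bisI (P s0 t0).
Proof.
  intros H. apply bisI_P. split.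
  - assert (Rabs (hh s0 t0) <= 0).
    { apply le_eps. intros eps He. destruct (H (eps/2)) as [s [t [HB Hd]]]. lra.
      apply bisI_P in HB as [HB _]. pose proof (hh_lip s0 t0 s t).
      rewrite HB, Rminus_0_r in H0. rewrite (Rabs_minus_sym s0), (Rabs_minus_sym t0) in H0. lra. }
    pose proof (Rabs_pos (hh s0 t0)). destruct (Req_dec (hh s0 t0) 0); auto.
    pose proof (Rabs_pos_lt _ H2). lra.
  - apply le_eps. intros eps He. destruct (H eps He) as [s [t [[_ K] Hd]]].
    pose proof (Ntri (P s0 t0) (P s t) (P (s0 - s) (t0 - t))).
    pose proof (N_P_upper (s0 - s) (t0 - t)). rewrite (Rabs_minus_sym s0), (Rabs_minus_sym t0) in H1.
    assert (N (P s0 t0) <= N (P s t) + N (P (s0 - s) (t0 - t))) by (apply H0; unfold P; simpl; ring).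
    lra.
Qed.

Variable sp : R.
Variable hsp : is_lub Sset sp.

Lemma sp_pos : 0 < sp.
Proof.
  destruct exists_pos as [s [t [Hs HB]]]. destruct hsp as [H _].
  assert (s <= sp) by (apply H; exists t; auto). lra.
Qed.

Lemma fill_sp s : 0 <= s < sp -> Sset s.
Proof.
  intros Hs. destruct (classic (exists s', Sset s' /\ s <= s')) as [[s' [[t' Ht'] Hle]]|hn].
  - destruct (fill s' t' s Ht') as [t Ht]; try lra. exists t; auto.
  - exfalso. destruct hsp as [_ H].
    assert (sp <= s). { apply H. intros s' Hs'. destruct (Rle_dec s' s) as [h|h]; auto.
      exfalso. apply hn. exists s'. split; auto. lra. }
    lra.
Qed.

Lemma sp_in : Sset sp.
Proof.
  pose proof sp_pos as Hsp. pose proof Ny_pos.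
  set (sn := fun n : nat => sp - sp / (INR n + 1)).
  assert (Hsn : forall n, 0 <= sn n < sp).
  { intros n. unfold sn. pose proof (pos_INR n).
    assert (0 < sp / (INR n + 1)) by (apply Rdiv_lt_0_compat; lra).
    assert (sp / (INR n + 1) <= sp).
    { unfold Rdiv. rewrite <- (Rmult_1_r sp) at 2. apply Rmult_le_compat_l. lra.
      rewrite <- Rinv_1. apply Rinv_le_contravar; lra. }
    lra. }
  assert (Hsd : forall n m, (n <= m)%nat -> Rabs (sn n - sn m) <= sp / (INR n + 1)).
  { intros n m Hnm. unfold sn. pose proof (le_INR _ _ Hnm). pose proof (pos_INR n).
    assert (sp / (INR m + 1) <= sp / (INR n + 1)).
    { unfold Rdiv. apply Rmult_le_compat_l. lra. apply Rinv_le_contravar; lra. }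
    assert (0 < sp / (INR m + 1)) by (apply Rdiv_lt_0_compat; lra).
    apply Rabs_le; lra. }
  set (tn := fun n => T (sn n)).
  assert (Hc : Cauchy_crit tn).
  { intros eps He. destruct (INR_unbounded (Kc * sp / (eps * eps))) as [N0 HN0].
    exists N0. intros n m Hn Hm. unfold R_dist, tn.
    assert (Hgen : forall n m, (N0 <= n)%nat -> (n <= m)%nat -> Rabs (T (sn n) - T (sn m)) < eps).
    { clear n m Hn Hm. intros n m Hn Hnm.
      pose proof (T_hold (sn n) (sn m) (fill_sp _ (Hsn n)) (fill_sp _ (Hsn m))) as Ht.
      pose proof (Hsd n m Hnm). pose proof (le_INR _ _ Hn). pose proof (pos_INR N0).
      assert (HK : 0 < Kc) by (unfold Kc, M0; pose proof (Rdiv_lt_0_compat Ny c0 H hc0); nra).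
      assert (sp / (INR n + 1) <= sp / (INR N0 + 1)).
      { unfold Rdiv. apply Rmult_le_compat_l. lra. apply Rinv_le_contravar; lra. }
      assert (Kc * (sp / (INR N0 + 1)) < eps * eps).
      { apply Rmult_lt_reg_r with (INR N0 + 1). lra.
        replace (Kc * (sp / (INR N0 + 1)) * (INR N0 + 1)) with (Kc * sp) by (field; lra).
        assert (Kc * sp < eps * eps * INR N0).
        { apply Rmult_lt_reg_r with (/ (eps * eps)). apply Rinv_0_lt_compat; nra.
          replace (eps * eps * INR N0 * / (eps * eps)) with (INR N0) by (field; lra).
          unfold Rdiv in HN0. lra. }
        nra. }
      assert (Habs : Rabs (T (sn n) - T (sn m)) * Rabs (T (sn n) - T (sn m)) < eps * eps).
      { rewrite <- Rabs_mult. rewrite Rabs_pos_eq by (pose proof (Rle_0_sqr (T (sn n) - T (sn m))); unfold Rsqr in *; lra).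
        eapply Rle_lt_trans. apply Ht. eapply Rle_lt_trans. 2: eassumption.
        apply Rmult_le_compat_l. lra. lra. }
      pose proof (Rabs_pos (T (sn n) - T (sn m))). nra. }
    destruct (Nat.le_ge_cases n m) as [h|h].
    - apply Hgen; auto.
    - rewrite Rabs_minus_sym. apply Hgen; auto. }
  destruct (R_complete tn Hc) as [ts Hts].
  exists ts. apply closedP. intros eps He.
  destruct (Hts (eps/2)) as [N1 HN1]. lra.
  destruct (INR_unbounded (2 * sp * Ny / eps)) as [N2 HN2].
  set (n := Nat.max N1 N2).
  exists (sn n), (tn n). split. apply T_spec, fill_sp, Hsn.
  specialize (HN1 n (Nat.le_max_l _ _)). unfold R_dist in HN1.
  assert (Rabs (sn n - sp) * Ny < eps / 2).
  { unfold sn. replace (sp - sp / (INR n + 1) - sp) with (- (sp / (INR n + 1))) by ring.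
    rewrite Rabs_Ropp. pose proof (le_INR _ _ (Nat.le_max_r N1 N2)). fold n in H0.
    pose proof (pos_INR n).
    rewrite Rabs_pos_eq by (apply Rlt_le, Rdiv_lt_0_compat; lra).
    apply Rmult_lt_reg_r with (2 * (INR n + 1) / eps). apply Rdiv_lt_0_compat; lra.
    replace (sp / (INR n + 1) * Ny * (2 * (INR n + 1) / eps)) with (2 * sp * Ny / eps) by (field; lra).
    replace (eps / 2 * (2 * (INR n + 1) / eps)) with (INR n + 1) by (field; lra). lra. }
  lra.
Qed.

Lemma S_iff s : Sset s <-> -sp <= s <= sp.
Proof.
  pose proof sp_pos. split.
  - intros [t Ht]. destruct hsp as [H1 _]. split.
    + assert (-s <= sp) by (apply H1; exists (-t); apply bisI_sym; auto). lra.
    + apply H1; exists t; auto.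
  - intros [h1 h2]. destruct (Rle_dec 0 s) as [h|h].
    + destruct (Req_dec s sp) as [->|e]. apply sp_in. apply fill_sp; lra.
    + destruct (Req_dec s (-sp)) as [->|e].
      * destruct sp_in as [t Ht]. exists (-t). apply bisI_sym; auto.
      * destruct (fill_sp (-s)) as [t Ht]. lra. exists (-t). replace s with (- - s) by ring. apply bisI_sym; auto.
Qed.

Lemma bisI_equiv z : inner_bisector N x z <-> bisI z.
Proof.
  unfold inner_bisector, bisector, unit_ball, bisI.
  rewrite (Next (vsub z (vopp x)) (fst z + x1, snd z + x2)) by (unfold vsub, vopp, vadd, vscal, x1, x2; simpl; ring).
  rewrite (Next (vsub z x) (fst z - x1, snd z - x2)) by (unfold vsub, vopp, vadd, vscal, x1, x2; simpl; ring).
  tauto.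
Qed.

Lemma ell_sub z z0 : ell (vsub z z0) = ell z - ell z0.
Proof. unfold ell, vsub, vopp, vadd, vscal; simpl. pose proof Nx0. unfold DD. field. lra. Qed.

Lemma ell_bound v : c0 * Rabs (ell v) <= N v.
Proof. rewrite (decomp v) at 2. apply Hc0. Qed.

Lemma main_sec : homeomorphic_to_unit_interval N (inner_bisector N x).
Proof.
  pose proof sp_pos as Hsp. pose proof Ny_pos as HNy.
  assert (HK : 0 < Kc) by (unfold Kc, M0; pose proof (Rdiv_lt_0_compat Ny c0 HNy hc0); nra).
  set (sf := fun u => sp * (2 * u - 1)).
  exists (fun u => P (sf u) (T (sf u))), (fun z => (ell z / sp + 1) / 2).
  assert (Hsf : forall u, 0 <= u <= 1 -> Sset (sf u)).
  { intros u Hu. apply S_iff. unfold sf. split; nra. }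
  assert (Hg : forall z, inner_bisector N x z -> Sset (ell z)).
  { intros z Hz. apply bisI_equiv in Hz. exists (tau z). rewrite <- decomp. auto. }
  split; [|split; [|split; [|split; [|split]]]].
  - intros u Hu. apply bisI_equiv. apply T_spec, Hsf, Hu.
  - intros z Hz. apply Hg, S_iff in Hz.
    assert (-1 <= ell z / sp <= 1).
    { split.
      - apply Rmult_le_reg_r with sp; auto. unfold Rdiv. rewrite Rmult_assoc, Rinv_l by lra. lra.
      - apply Rmult_le_reg_r with sp; auto. unfold Rdiv. rewrite Rmult_assoc, Rinv_l by lra. lra. }
    lra.
  - intros u Hu. simpl. rewrite ell_P. unfold sf. field. lra.
  - intros z Hz. simpl.
    assert (E : sf ((ell z / sp + 1) / 2) = ell z) by (unfold sf; field; lra).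
    rewrite E.
    assert (HT : T (ell z) = tau z).
    { apply (uniq (ell z)). apply T_spec, Hg, Hz. rewrite <- decomp. apply bisI_equiv, Hz. }
    rewrite HT. symmetry. apply decomp.
  - intros t0 Ht0 eps He.
    set (d := Rmin (eps / (4 * sp * Ny)) (eps * eps / (8 * Kc * sp))).
    assert (Hd1 : 4 * sp * Ny * d <= eps).
    { apply Rle_trans with (4 * sp * Ny * (eps / (4 * sp * Ny))).
      apply Rmult_le_compat_l. nra. apply Rmin_l. right; field; nra. }
    assert (Hd2 : 8 * Kc * sp * d <= eps * eps).
    { apply Rle_trans with (8 * Kc * sp * (eps * eps / (8 * Kc * sp))).
      apply Rmult_le_compat_l. nra. apply Rmin_r. right; field; nra. }
    assert (Hd : 0 < d).
    { unfold d. apply Rmin_glb_lt; apply Rdiv_lt_0_compat; nra. }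
    exists d. split; auto. intros t Ht Htd.
    rewrite (Next (vsub (P (sf t) (T (sf t))) (P (sf t0) (T (sf t0)))) (P (sf t - sf t0) (T (sf t) - T (sf t0))))
      by (unfold vsub, vopp, vadd, vscal, P; simpl; ring).
    eapply Rle_lt_trans. apply N_P_upper.
    assert (Es : Rabs (sf t - sf t0) = 2 * sp * Rabs (t - t0)).
    { unfold sf. replace (sp * (2 * t - 1) - sp * (2 * t0 - 1)) with ((2 * sp) * (t - t0)) by ring.
      rewrite Rabs_mult, Rabs_pos_eq by lra. ring. }
    pose proof (T_hold _ _ (Hsf t Ht) (Hsf t0 Ht0)) as HT. rewrite Es in HT.
    pose proof (Rabs_pos (t - t0)).
    assert (A1 : Rabs (sf t - sf t0) * Ny < eps / 2).
    { rewrite Es. assert (2 * sp * Rabs (t - t0) * Ny < 2 * sp * d * Ny).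
      { apply Rmult_lt_compat_r. lra. apply Rmult_lt_compat_l. lra. auto. }
      lra. }
    assert (A2 : Rabs (T (sf t) - T (sf t0)) * Rabs (T (sf t) - T (sf t0)) <= eps / 2 * (eps / 2)).
    { rewrite <- Rabs_mult. rewrite Rabs_pos_eq by (pose proof (Rle_0_sqr (T (sf t) - T (sf t0))); unfold Rsqr in *; lra).
      eapply Rle_trans. apply HT.
      apply Rle_trans with (Kc * (2 * sp * d)).
      apply Rmult_le_compat_l. lra. apply Rmult_le_compat_l. lra. lra. lra. }
    assert (A3 : Rabs (T (sf t) - T (sf t0)) <= eps / 2).
    { pose proof (Rabs_pos (T (sf t) - T (sf t0))). nra. }
    lra.
  - intros z0 Hz0 eps He. exists (eps * (2 * sp * c0)). split. repeat apply Rmult_lt_0_compat; lra.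
    intros z Hz Hzd.
    replace ((ell z / sp + 1) / 2 - (ell z0 / sp + 1) / 2) with (ell (vsub z z0) / (2 * sp))
      by (rewrite ell_sub; field; lra).
    pose proof (ell_bound (vsub z z0)).
    unfold Rdiv. rewrite Rabs_mult, (Rabs_pos_eq (/ (2 * sp))) by (left; apply Rinv_0_lt_compat; lra).
    apply Rmult_lt_reg_r with (2 * sp * c0). nra.
    replace (Rabs (ell (vsub z z0)) * / (2 * sp) * (2 * sp * c0)) with (c0 * Rabs (ell (vsub z z0))) by (field; lra).
    lra.
Qed.
End S.

Theorem proposition4p1 (N : vec -> R) (HN : is_norm N) (x : vec)
  (hx : unit_circle N x) :
  homeomorphic_to_unit_interval N (inner_bisector N x).
Proof.
  destruct (lower_bound N HN x hx) as [c0 [hc0 Hc0]].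
  destruct (completeness (Sset N x)) as [sp hsp].
  - exists (1 / c0). intros s [t Ht]. pose proof (S_bound N x c0 hc0 Hc0 s t Ht).
    pose proof (Rle_abs s). lra.
  - exists 0, 0. apply bisI_0; auto.
  - exact (main_sec N HN x hx c0 hc0 Hc0 sp hsp).
Qed.
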